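(* Let $\mathcal X=\{1,\dots,N\}$, let $m>0$, and let $p,w$ be probability distributions on $\mathcal X$ with $p(x)\ge m$ and $w(x)\ge m$ for all $x\in\mathcal X$. Then for every probability distribution $v$ on $\mathcal X$, \[ D(w\parallel p)-D(v\parallel p)\le \log\frac1m\cdot\lVert w-v\rVert . \]
   Context: All logarithms are natural. For distributions $q,r$ on $\mathcal X$ with $r(x)>0$ for all $x$, $D(q\parallel r)=\sum_{x:\,q(x)>0}q(x)\log\frac{q(x)}{r(x)}$. For distributions $p,q$, $\lVert p-q\rVert=\sum_{x\in\mathcal X}|p(x)-q(x)|$. *)

(* Defs.v *)
From mathcomp Require Import all_boot all_order all_algebra.
From mathcomp Require Import all_classical all_reals.
From mathcomp Require Import exp.
Set Implicit Arguments. Unset Strict Implicit. Unset Printing Implicit Defensive.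
Import Order.TTheory GRing.Theory Num.Theory.
Local Open Scope ring_scope.

(* Distributions on the finite alphabet X = 'I_N (i.e. {1,...,N} up to relabelling),
   valued in an arbitrary real type R. Logarithm is the natural logarithm [ln]. *)
Definition is_distr (R : realType) (N : nat) (q : 'I_N -> R) : Prop :=
  (forall x, 0 <= q x) /\ \sum_(x < N) q x = 1.

Definition KL (R : realType) (N : nat) (q r : 'I_N -> R) : R :=
  \sum_(x < N | 0 < q x) q x * ln (q x / r x).

Definition l1dist (R : realType) (N : nat) (p q : 'I_N -> R) : R :=
  \sum_(x < N) `|p x - q x|.

(* Main.v *)
Require Import Defs.
From mathcomp Require Import all_boot all_order all_algebra.
From mathcomp Require Import all_classical all_reals.
From mathcomp Require Import exp.
From mathcomp Require Import ring lra.
Import Order.TTheory GRing.Theory Num.Theory.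
Local Open Scope ring_scope.

Lemma ln_diff_le {R : realType} (a b : R) : 0 < a -> 0 < b ->
  b * (ln a - ln b) <= a - b.
Proof.
move=> a0 b0.
have -> : ln a - ln b = ln (a / b) by rewrite ln_div // posrE.
have h : ln (a / b) <= a / b - 1.
  have := @le_ln1Dx R (a / b - 1).
  rewrite (_ : 1 + (a / b - 1) = a / b); last by rewrite addrCA subrr addr0.
  apply.
  rewrite ltrBrDr addNr divr_gt0 //.
have -> : a - b = b * (a / b - 1) by rewrite mulrBr mulr1 mulrCA divff ?gt_eqF // mulr1.
by rewrite ler_wpM2l // ltW.
Qed.

Lemma term_le (R : realType) (a b c : R) : 0 < a -> 0 <= b -> 0 < c ->
  (if 0 < a then a * ln (a / c) else 0) - (if 0 < b then b * ln (b / c) else 0)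
  <= (a - b) * ln (a / c) + (a - b).
Proof.
move=> a0 b0 c0; rewrite a0.
case: ifP => hb.
  have := ln_diff_le _ _ a0 hb.
  rewrite !ln_div ?posrE //.
  move=> H.
  have -> : a * (ln a - ln c) - b * (ln b - ln c) =
    (a - b) * (ln a - ln c) + b * (ln a - ln b) by ring.
  by rewrite lerD2l.
have -> : b = 0 by apply/eqP; rewrite eq_le b0 andbT leNgt hb.
rewrite !subr0 lerDl; exact: ltW.
Qed.

Theorem lemma3 (R : realType) (N : nat) (m : R) (p w v : 'I_N -> R) :
  0 < m ->
  is_distr p -> is_distr w -> is_distr v ->
  (forall x, m <= p x) -> (forall x, m <= w x) ->
  KL w p - KL v p <= ln (m^-1) * l1dist w v.
Proof.
move=> m0 [p0 p1] [w0 w1] [v0 v1] pm wm.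
have le1 (q : 'I_N -> R) x : (forall y, 0 <= q y) -> \sum_(y < N) q y = 1 -> q x <= 1.
  move=> q0 q1; rewrite -q1 (bigD1 x) //= lerDl sumr_ge0 //.
have pp x : 0 < p x by apply: lt_le_trans (pm x).
have wp x : 0 < w x by apply: lt_le_trans (wm x).
rewrite /KL (big_mkcond (fun x => 0 < w x)) (big_mkcond (fun x => 0 < v x)) /=.
rewrite -sumrB.
apply: le_trans (_ : _ <= \sum_(x < N) ((w x - v x) * ln (w x / p x) + (w x - v x))) _.
  by apply: ler_sum => x _; apply: term_le.
rewrite big_split /= sumrB w1 v1 subrr addr0 /l1dist mulr_sumr.
apply: ler_sum => x _.
have hb : `|ln (w x / p x)| <= ln m^-1.
  have m1 : m <= 1 by apply: le_trans (wm x) (le1 _ x w0 w1).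
  rewrite ler_norml; apply/andP; split.
    rewrite lnV ?posrE // opprK ler_ln ?posrE ?divr_gt0 //.
    rewrite ler_pdivlMr // (@le_trans _ _ m) // ler_piMr ?(ltW m0) //.
    exact: le1.
  rewrite ler_ln ?posrE ?divr_gt0 ?invr_gt0 //.
  rewrite ler_pdivrMr //; apply: (@le_trans _ _ 1); first exact: le1.
  rewrite -[X in X <= _](mulVf (lt0r_neq0 m0)); apply: ler_wpM2l; [rewrite invr_ge0; exact: ltW | exact: pm].
have e1 := ler_norm ((w x - v x) * ln (w x / p x)).
apply: le_trans e1 _.
rewrite normrM [X in _ <= X]mulrC.
apply: ler_wpM2l; [exact: normr_ge0 | exact: hb].
Qed.
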